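(* Let $\mathcal{C}$ be a finite or countable alphabet with letter probabilities $(p_\alpha)_{\alpha\in\mathcal{C}}$, $0<p_\alpha<1$, $\sum_\alpha p_\alpha=1$, and let $\mathbb{P}$ be the product measure with these identically distributed marginals. Then for every $n\ge2$, $\mathbb{P}\Big(\bigcup_{j=1}^{\lceil n/2\rceil}B_n(j)\Big)=\mathbb{P}\Big(\bigcup_{j=\lfloor n/2\rfloor}^{n-1}R_n(j)\Big)\le\frac{n}{2}\,m_2^{\lfloor n/2\rfloor}$.
   Context: $\mathbb{P}(x_1^n)=\prod_{i=1}^n p_{x_i}$; $x_a^b=(x_a,\dots,x_b)$; $m_2=\sum_\alpha p_\alpha^2$. For $1\le j\le n-1$, $R_n(j)=\{x_1^n\in\mathcal{C}^n: x_1^j=x_{n-j+1}^n\}$, and $B_n(j)$ is the set of strings $x_1^n\in\mathcal{C}^n$ that are obtained by repeating the block $x_1^j$: writing $n=j\lfloor n/j\rfloor+r$ with $0\le r<j$, $x_1^n=(x_1^j,x_1^j,\dots,x_1^j,x_1^r)$ with $\lfloor n/j\rfloor$ copies of $x_1^j$ (equivalently $x_{i+j}=x_i$ for all $1\le i\le n-j$). *)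

(* Defs.v *)
From HB Require Import structures.
From mathcomp Require Import all_boot all_order all_algebra.
From mathcomp Require Import all_classical all_reals all_analysis.
Set Implicit Arguments. Unset Strict Implicit. Unset Printing Implicit Defensive.
Import Order.TTheory GRing.Theory Num.Theory.
Local Open Scope classical_set_scope.
Local Open Scope ring_scope.

(* Strings x_1^n are n.-tuples over a countable (finite or infinite) alphabet C;
   positions are 0-indexed: x_{i+1} = tnth x i. *)

Definition Prob {R : realType} {C : countType} (p : C -> R) (n : nat)
  (A : set (n.-tuple C)) : \bar R :=
  (\esum_(x in A) (\prod_(i < n) p (tnth x i))%:E)%E.

Definition m2 {R : realType} {C : countType} (p : C -> R) : R :=
  fine (\esum_(a in [set: C]) ((p a) ^+ 2)%:E)%E.

(* R_n(j) = { x : x_1^j = x_{n-j+1}^n } *)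
Definition Rset {C : countType} (n j : nat) : set (n.-tuple C) :=
  [set x | forall (i k : 'I_n), (i < j)%N -> (k : nat) = (n - j + i)%N ->
           tnth x i = tnth x k].

(* B_n(j) = { x : x_{i+j} = x_i for all 1 <= i <= n-j } *)
Definition Bset {C : countType} (n j : nat) : set (n.-tuple C) :=
  [set x | forall (i k : 'I_n), (k : nat) = (i + j)%N -> tnth x i = tnth x k].

Arguments Rset {C} n j _.
Arguments Bset {C} n j _.
Arguments Prob {R C} p n A.

(* Main.v *)
Require Import Defs.
From HB Require Import structures.
From mathcomp Require Import all_boot all_order all_algebra.
From mathcomp Require Import all_classical all_reals all_analysis.
From mathcomp Require Import zify ring lra.
Import Order.TTheory GRing.Theory Num.Theory.
Local Open Scope classical_set_scope.
Local Open Scope ring_scope.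
Set Implicit Arguments. Unset Strict Implicit.

Lemma esum_subset (R : realType) (T : choiceType) (A B : set T) (a : T -> \bar R) :
  (forall x, (0 <= a x)%E) -> A `<=` B ->
  (\esum_(i in A) a i <= \esum_(i in B) a i)%E.
Proof.
move=> a0 AB; rewrite esum_mkcond [X in (_ <= X)%E]esum_mkcond.
apply: le_esum => i _; case: ifP => iA; last by case: ifP.
by rewrite ifT // inE; apply: AB; rewrite -inE.
Qed.

Lemma esum_setU (R : realType) (T : choiceType) (A B : set T) (a : T -> \bar R) :
  (forall x, (0 <= a x)%E) ->
  (\esum_(i in A `|` B) a i <= \esum_(i in A) a i + \esum_(i in B) a i)%E.
Proof.
move=> a0; rewrite esum_mkcond (esum_mkcond A) (esum_mkcond B) -esumD; last first.
- by move=> i _; case: ifP.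
- by move=> i _; case: ifP.
apply: le_esum => i _; rewrite in_setU.
by case: (i \in A); case: (i \in B) => /=; rewrite ?adde0 ?add0e ?leeDl ?a0.
Qed.

Lemma esum_scale_le (R : realType) (T : choiceType) (I : set T) (g : T -> \bar R)
  (c : R) (B : \bar R) : 0 <= c -> (forall i, (0 <= g i)%E) ->
  (\esum_(i in I) g i <= B)%E ->
  (\esum_(i in I) (g i * c%:E) <= B * c%:E)%E.
Proof.
move=> c0 g0 hB.
apply: ge_ereal_sup => /= _ [X [finX XI]] <-.
rewrite -[X in (X <= _)%E](_ : (\sum_(i \in X) g i) * c%:E = _)%E; last first.
  by rewrite muleC ge0_mule_fsumr //; apply: eq_fsbigr => i _; rewrite muleC.
apply: lee_wpmul2r; first by rewrite lee_fin.
apply: le_trans hB; apply: esum_ge; by exists X.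
Qed.
Lemma esum_tuple_prod (R : realType) (C : countType) (d : nat)
  (f : nat -> C -> R) (b : nat -> R) :
  (forall i a, 0 <= f i a) ->
  (forall i, (i < d)%N -> (\esum_(a in [set: C]) (f i a)%:E <= (b i)%:E)%E) ->
  (\esum_(y in [set: d.-tuple C]) (\prod_(i < d) f i (tnth y i))%:E
     <= (\prod_(i < d) b i)%:E)%E.
Proof.
elim: d f b => [|d IH] f b f0 hb.
  rewrite (_ : [set: 0.-tuple C] = [set [tuple]]); last first.
    by apply/seteqP; split => y // _; rewrite /= [y]tuple0.
  by rewrite esum_set1 ?big_ord0 // lee_fin big_ord0.
have b0 i : (i < d.+1)%N -> 0 <= b i.
  move=> id; rewrite -lee_fin; apply: le_trans (hb i id).
  by apply: esum_ge0 => a _; rewrite lee_fin.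
rewrite (reindex_esum ([set: C] `*`` (fun _ => [set: d.-tuple C])) _
           (fun z => cons_tuple z.1 z.2)); last first.
  split.
  - by move=> z _.
  - by move=> [a y] [a' y'] _ _ /= /(congr1 val) /= [-> /val_inj ->].
  - move=> y _; case: y => [[|a s] hs] //=.
    exists (a, behead_tuple (Tuple hs)) => //=.
    by apply: val_inj.
rewrite -(esum_esum (a := fun (a : C) (y : d.-tuple C) => (\prod_(i < d.+1) f i (tnth (cons_tuple a y) i))%:E)); last first.
  by move=> a y _ _; rewrite lee_fin; apply: prodr_ge0 => i _.
have -> : \prod_(i < d.+1) b i = (\prod_(i < d) b i.+1) * b 0.
  by rewrite big_ord_recl mulrC.
rewrite EFinM.
apply: le_trans (_ : (\esum_(a in [set: C]) ((\prod_(i < d) b i.+1)%:E * (f 0 a)%:E) <= _)%E).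
  apply: le_esum => a _.
  rewrite (eq_esum (b := fun y => ((\prod_(i < d) f i.+1 (tnth y i))%:E * (f 0 a)%:E)%E)); last first.
    move=> y _; rewrite big_ord_recl EFinM muleC; congr (_%:E * _%:E)%E.
    by apply: eq_bigr => i _; rewrite !(tnth_nth a).
  apply: esum_scale_le => //.
    by move=> y; rewrite lee_fin; apply: prodr_ge0 => i _.
  apply: (IH (fun i => f i.+1) (fun i => b i.+1)) => // i id.
  exact: hb.
under eq_esum => a _ do rewrite muleC.
rewrite muleC; apply: esum_scale_le.
- by apply: prodr_ge0 => i _; apply: b0; rewrite ltnS ltn_ord.
- by move=> a; rewrite lee_fin.
- exact: hb.
Qed.
Lemma Bset_periodic (C : countType) n d (x : n.-tuple C) x0 :
  (0 < d)%N -> Bset n d x -> forall k, (k < n)%N -> nth x0 x k = nth x0 x (k %% d).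
Proof.
move=> d0 hB k; elim/ltn_ind: k => k IHk kn.
case: (ltnP k d) => kd; first by rewrite modn_small.
have hk' : (k - d < n)%N by lia.
have e := hB (Ordinal hk') (Ordinal kn) (esym (subnK kd)).
rewrite !(tnth_nth x0) /= in e.
rewrite -e IHk; [|lia|lia].
by rewrite -[in RHS](subnK kd) modnDr.
Qed.

Lemma Bset_shift (C : countType) n d (x : n.-tuple C) x0 :
  Bset n d x -> forall i, (i + d < n)%N -> nth x0 x (i + d) = nth x0 x i.
Proof.
move=> hB i hi.
have hi' : (i < n)%N by lia.
have e := hB (Ordinal hi') (Ordinal hi) erefl.
by rewrite !(tnth_nth x0) /= in e.
Qed.
Lemma m2_facts (R : realType) (C : countType) (p : C -> R)
  (hp : forall a, 0 < p a < 1)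
  (hsum : (\esum_(a in [set: C]) (p a)%:E)%E = 1%E) :
  (\esum_(a in [set: C]) (p a ^+ 2)%:E)%E = (m2 p)%:E /\
  0 <= m2 p <= 1 /\ (forall a, p a ^+ 2 <= m2 p).
Proof.
have h0 : (0 <= \esum_(a in [set: C]) (p a ^+ 2)%:E)%E.
  by apply: esum_ge0 => a _; rewrite lee_fin sqr_ge0.
have h1 : (\esum_(a in [set: C]) (p a ^+ 2)%:E <= 1)%E.
  rewrite -hsum; apply: le_esum => a _; rewrite lee_fin.
  have /andP[pa0 pa1] := hp a.
  by rewrite expr2 ler_piMl // ltW.
have hf : (\esum_(a in [set: C]) (p a ^+ 2)%:E)%E \is a fin_num.
  by rewrite ge0_fin_numE // (le_lt_trans h1) // ltry.
have E : (\esum_(a in [set: C]) (p a ^+ 2)%:E)%E = (m2 p)%:E by rewrite /m2 fineK.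
split => //; split.
  by rewrite -!lee_fin -E h0 h1.
move=> a; rewrite -lee_fin -E; apply: esum_ge.
exists [set a]; first by split => //; exact: finite_set1.
by rewrite fsbig_set1.
Qed.
Lemma B_bound (R : realType) (C : countType) (p : C -> R)
  (hp : forall a, 0 < p a < 1)
  (hsum : (\esum_(a in [set: C]) (p a)%:E)%E = 1%E)
  (n d : nat) (hd0 : (0 < d)%N) (hdn : (d <= n)%N) (hu : (n./2 <= n - d)%N) :
  (Prob p n (Bset n d) <= (m2 p ^+ n./2)%:E)%E.
Proof.
have [E [/andP[m0 m1] pm]] := m2_facts hp hsum.
set s := Num.sqrt (m2 p).
have s0 : 0 <= s := sqrtr_ge0 _.
have s1 : s <= 1 by rewrite /s -sqrtr1 ler_wsqrtr.
have ss : s ^+ 2 = m2 p := sqr_sqrtr m0.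
have pge0 a : 0 <= p a by have /andP[/ltW] := hp a.
have ps a : p a <= s.
  by rewrite -(ger0_norm (pge0 a)) -sqrtr_sqr /s ler_wsqrtr.
set m := minn d (n - d).
have md : (m <= d)%N by rewrite geq_minl.
have mnd : (d + m <= n)%N by rewrite /m; lia.
pose e (x : n.-tuple C) : d.-tuple C := [tuple tnth x (widen_ord hdn i) | i < d].
pose f k a := if (k < m)%N then p a ^+ 2 else p a.
pose G (y : d.-tuple C) := \prod_(i < d) f i (tnth y i).
pose K := s ^+ (n - d - m).
have K0 : 0 <= K by rewrite exprn_ge0.
have f0 k a : 0 <= f k a by rewrite /f; case: ifP => _; rewrite ?sqr_ge0.
have G0 y : 0 <= G y by apply: prodr_ge0 => i _.
have key x : Bset n d x -> \prod_(i < n) p (tnth x i) <= G (e x) * K.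
  move=> hx.
  have n0 : (0 < n)%N by lia.
  pose x0 := tnth x (Ordinal n0).
  pose F i := p (nth x0 x i).
  have -> : \prod_(i < n) p (tnth x i) = \prod_(0 <= i < n) F i.
    by rewrite big_mkord; apply: eq_bigr => i _; rewrite (tnth_nth x0).
  have -> : G (e x) = \prod_(0 <= i < d) f i (nth x0 x i).
    by rewrite big_mkord; apply: eq_bigr => i _; rewrite tnth_mktuple (tnth_nth x0).
  rewrite (big_cat_nat (leq0n d) hdn) /=.
  rewrite (big_cat_nat (leq_addr m d) mnd) /=.
  rewrite (big_cat_nat (leq0n m) md) /=.
  rewrite (big_cat_nat (leq0n m) md) /=.
  have sh : \prod_(d <= i < d + m) F i = \prod_(0 <= i < m) F i.
    rewrite -{1}[d]add0n big_addn addKn.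
    by apply: eq_big_nat => i /andP[_ im]; rewrite /F Bset_shift //; lia.
  have e1 : \prod_(0 <= i < m) f i (nth x0 x i) = (\prod_(0 <= i < m) F i) ^+ 2.
    rewrite -prodrXl; apply: eq_big_nat => i /andP[_ im].
    by rewrite /f im.
  have e2 : \prod_(m <= i < d) f i (nth x0 x i) = \prod_(m <= i < d) F i.
    apply: eq_big_nat => i /andP[mi _].
    by rewrite /f ltnNge mi.
  rewrite sh e1 e2.
  have -> : \prod_(0 <= i < m) F i * \prod_(m <= i < d) F i *
     (\prod_(0 <= i < m) F i * \prod_(d + m <= i < n) F i) =
     ((\prod_(0 <= i < m) F i) ^+ 2 * \prod_(m <= i < d) F i) * \prod_(d + m <= i < n) F i.
    by rewrite expr2; ring.
  apply: ler_wpM2l.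
    by apply: mulr_ge0; [apply: exprn_ge0|]; apply: prodr_ge0 => i _; apply: pge0.
  rewrite /K -subnDA -prodr_const_nat.
  by apply: ler_prod => i _; rewrite pge0 ps.
have inj : set_inj (Bset n d) e.
  move=> x x' /[!inE] hx hx' h.
  have n0 : (0 < n)%N by lia.
  pose x0 := tnth x (Ordinal n0).
  apply: val_inj; apply: (@eq_from_nth _ x0) => [|k]; first by rewrite !size_tuple.
  rewrite size_tuple => kn.
  rewrite (Bset_periodic x0 hd0 hx kn) (Bset_periodic x0 hd0 hx' kn).
  have kd : (k %% d < d)%N by rewrite ltn_pmod.
  have := congr1 (fun y => tnth y (Ordinal kd)) h.
  by rewrite /= !tnth_mktuple !(tnth_nth x0).
rewrite /Prob.
apply: (@le_trans _ _ (\esum_(x in Bset n d) ((G (e x))%:E * K%:E)%E)).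
  by apply: le_esum => x hx; rewrite -EFinM lee_fin; exact: key.
rewrite -(esum_image _ e (fun y => ((G y)%:E * K%:E)%E)) //.
apply: (le_trans (esum_subset (a := fun y => ((G y)%:E * K%:E)%E) (A := e @` Bset n d) (B := [set: d.-tuple C]) _ _)).
- by move=> y; rewrite -EFinM lee_fin mulr_ge0.
- by [].
apply: (le_trans (esum_scale_le (I := [set: d.-tuple C]) (g := fun y => (G y)%:E) (B := (\prod_(i < d) (if (i < m)%N then m2 p else 1))%:E) _ _ _)).
- exact: K0.
- by move=> y; rewrite lee_fin.
- apply: (esum_tuple_prod (f := f) (b := fun i => if (i < m)%N then m2 p else 1)) => // i _.
  rewrite /f; case: ifP => _; first by rewrite E.
  by rewrite hsum.
rewrite -EFinM lee_fin.
have -> : \prod_(i < d) (if (i < m)%N then m2 p else 1) = m2 p ^+ m.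
  rewrite -(big_mkord xpredT (fun i => if (i < m)%N then m2 p else 1)).
  rewrite (big_cat_nat (leq0n m) md) /=.
  rewrite (eq_big_nat _ _ (F2 := fun=> m2 p)); last by move=> i /andP[_ ->].
  rewrite (eq_big_nat _ _ (F1 := fun i => if (i < m)%N then m2 p else 1) (F2 := fun=> 1)); last first.
    by move=> i /andP[mi _]; rewrite ltnNge mi.
  by rewrite prodr_const_nat big1 // mulr1 subn0.
rewrite /K -ss -!exprM -exprD.
apply: ler_wiXn2l => //.
have h := odd_double_half n.
rewrite -muln2 in h.
rewrite /m; case: (odd n) h => /= h; lia.
Qed.
Lemma Rset_Bset (C : countType) n j : (j <= n)%N -> @Rset C n j = Bset n (n - j).
Proof.
move=> jn; apply/seteqP; split => x hx i k hk.
- move: (ltn_ord k) => kn; apply: hx; lia.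
- move=> e; apply: hx; lia.
Qed.

Lemma esum_bigcup_le (R : realType) (T : choiceType) (F : nat -> set T)
  (a : T -> \bar R) (a0 : forall x, (0 <= a x)%E) (k : nat) :
  (\esum_(x in \bigcup_(i in [set i | (i < k)%N]) F i) a x
     <= \sum_(i < k) \esum_(x in F i) a x)%E.
Proof.
elim: k => [|k IH].
  rewrite big_ord0 (_ : \bigcup_(i in _) F i = set0) ?esum_set0 //.
  by apply/seteqP; split => x // [i /=].
rewrite big_ord_recr /=.
rewrite (_ : \bigcup_(i in [set i | (i < k.+1)%N]) F i =
   \bigcup_(i in [set i | (i < k)%N]) F i `|` F k); last first.
  apply/seteqP; split => x.
  - move=> [i /= ik hx]; case: (ltngtP i k) => h.
    + by left; exists i.
    + lia.
    + by right; rewrite -h.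
  - case=> [[i /= ik hx]|hx].
    + by exists i => //=; lia.
    + by exists k => //=.
apply: le_trans (esum_setU _ _ a0) _.
by apply: leeD.
Qed.

Lemma B1_B2 (C : countType) n : @Bset C n 1 `<=` Bset n 2.
Proof.
move=> x hx i k hk.
have n0 : (0 < n)%N by have := ltn_ord i; lia.
pose x0 := tnth x (Ordinal n0).
rewrite !(tnth_nth x0) hk.
have hkn := ltn_ord k.
rewrite (_ : (i + 2 = (i + 1) + 1)%N); last by lia.
by rewrite !(Bset_shift x0 hx) //; lia.
Qed.

Unset Implicit Arguments.
Theorem lemma4 (R : realType) (C : countType) (p : C -> R)
  (hp : forall a, 0 < p a < 1)
  (hsum : (\esum_(a in [set: C]) (p a)%:E)%E = 1%E)
  (n : nat) (hn : (2 <= n)%N) :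
  Prob p n (\bigcup_(j in [set j : nat | (1 <= j <= uphalf n)%N]) Bset n j)
    = Prob p n (\bigcup_(j in [set j : nat | (n./2 <= j <= n.-1)%N]) Rset n j)
  /\ (Prob p n (\bigcup_(j in [set j : nat | (n./2 <= j <= n.-1)%N]) Rset n j)
       <= ((n%:R / 2) * m2 p ^+ n./2)%:E)%E.
Proof.
have h1 := odd_double_half n.
have h2 := uphalf_half n.
rewrite -muln2 in h1.
have EQ : \bigcup_(j in [set j : nat | (1 <= j <= uphalf n)%N]) Bset n j
    = \bigcup_(j in [set j : nat | (n./2 <= j <= n.-1)%N]) @Rset C n j.
  apply/seteqP; split => x [j /= hj hx].
  - exists (n - j)%N; first by rewrite /=; case: (odd n) h1 h2 hj => /=; lia.
    by rewrite Rset_Bset ?leq_subr // subKn //; case: (odd n) h1 h2 hj => /=; lia.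
  - exists (n - j)%N; first by rewrite /=; case: (odd n) h1 h2 hj => /=; lia.
    by rewrite -Rset_Bset //; case: (odd n) h1 h2 hj => /=; lia.
rewrite -EQ; split => //.
have w0 : forall x : n.-tuple C, (0 <= (\prod_(i < n) p (tnth x i))%:E)%E.
  move=> x; rewrite lee_fin; apply: prodr_ge0 => i _.
  by have /andP[/ltW] := hp (tnth x i).
set l := (odd n).+1.
apply: (@le_trans _ _ (Prob p n (\bigcup_(i in [set i | (i < n./2)%N]) Bset n (l + i)))).
  apply: esum_subset => // x [j /= hj hx].
  case: (boolP (odd n)) => hodd; rewrite /l; [rewrite hodd /= | rewrite (negbTE hodd) /=].
  - case: (ltnP 1 j) => hj1.
      exists (j - 2)%N; first by rewrite /=; move: h1 h2 hj; rewrite hodd /=; lia.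
      by rewrite /= (_ : (2 + (j - 2) = j)%N) //; lia.
    exists 0%N; first by rewrite /=; lia.
    rewrite /= addn0; apply: B1_B2.
    by rewrite (_ : 1%N = j) //; lia.
  - exists (j - 1)%N; first by rewrite /=; move: h1 h2 hj; rewrite (negbTE hodd) /=; lia.
    by rewrite /= (_ : (1 + (j - 1) = j)%N) //; lia.
apply: le_trans (esum_bigcup_le _ w0 _) _.
apply: (@le_trans _ _ (\sum_(i < n./2) (m2 p ^+ n./2)%:E)%E).
  apply: lee_sum => i _.
  apply: B_bound => //; rewrite /l; have := ltn_ord i;
    case: (odd n) h1 h2 => /= h1' h2' hi; lia.
rewrite sumEFin lee_fin sumr_const card_ord -[_ *+ n./2]mulr_natl.
have [_ [/andP[m0 _] _]] := m2_facts hp hsum.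
apply: ler_wpM2r; first exact: exprn_ge0.
have : ((n./2 * 2)%:R <= n%:R :> R) by rewrite ler_nat; lia.
rewrite natrM => h.
lra.
Qed.
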